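(* Let $N\ge 1$, let $q\in\mathbb C$, and let $S_N$ be the symmetric group with group algebra $\mathbb C[S_N]$, with composition convention $(\sigma_2\sigma_1)(i)=\sigma_2(\sigma_1(i))$, and let $e$ be its identity element. For a transposition $t=(A,A+1)$ of neighboring integers and $x\in\mathbb C$, let $w_{t,x}:\mathbb C[S_N]\to\mathbb C[S_N]$ be the linear operator given on $\sigma\in S_N$ by $$w_{t,x}(\sigma)=\begin{cases}(1-x)\sigma+x\,t\sigma, & \text{if } \sigma^{-1}(A)<\sigma^{-1}(A+1),\\ (1-qx)\sigma+qx\,t\sigma, & \text{if } \sigma^{-1}(A)>\sigma^{-1}(A+1).\end{cases}$$ For any transpositions of neighboring integers $t_1,\dots,t_n$ and parameters $x_1,\dots,x_n\in\mathbb C$, define coefficients $f_n(s\to\pi)$ and $\tilde f_n(s\to\pi)$, $s,\pi\in S_N$, by $$w_{t_n,x_n}\cdots w_{t_1,x_1}\, s=\sum_{\pi\in S_N} f_n(s\to\pi)\,\pi,\qquad w_{t_1,x_1}w_{t_2,x_2}\cdots w_{t_n,x_n}\, s=\sum_{\pi\in S_N}\tilde f_n(s\to\pi)\,\pi .$$ Then for every $\pi\in S_N$, $$f_n(e\to\pi)=\tilde f_n(e\to\pi^{-1}).$$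
   Context: All objects are defined in the claim; the operators are applied in opposite orders in the definitions of $f_n$ and $\tilde f_n$. *)

(* Defs.v *)
From HB Require Import structures.
From mathcomp Require Import all_boot all_order all_algebra all_fingroup.
From mathcomp Require Import complex.
From mathcomp Require Import Rstruct.
Set Implicit Arguments. Unset Strict Implicit. Unset Printing Implicit Defensive.
Import Order.TTheory GRing.Theory Num.Theory.
Local Open Scope ring_scope.

Notation C := (complex Rdefinitions.R).

(* Elements of the group algebra C[S_N] are represented by their coefficient
   functions 'S_N -> C; the basis element sigma is [delta sigma]. *)
Definition delta (N : nat) (s : 'S_N) : 'S_N -> C :=
  fun p => if p == s then 1 else 0.

(* The adjacent transposition t = (A, A+1); meaningful when A.+1 < N. *)
Definition adjt (N : nat) (A : 'I_N) : 'S_N := tperm A (insubd A A.+1).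

(* Coefficient of pi in w_{t,x}(sigma), for t = (A,A+1).  The paper's product
   t sigma (apply sigma first, then t) is [sigma * adjt A] in MathComp, since
   (s * t) i = t (s i) (lemma permM). *)
Definition wcoef (N : nat) (q x : C) (A : 'I_N) (sigma pi : 'S_N) : C :=
  let y := if (val ((sigma^-1)%g A) < val ((sigma^-1)%g (insubd A A.+1)))%N then x else q * x in
  (if pi == sigma then 1 - y else 0) + (if pi == (sigma * adjt A)%g then y else 0).

Definition wop (N : nat) (q : C) (Ax : 'I_N * C) (v : 'S_N -> C) : 'S_N -> C :=
  fun pi => \sum_(sigma : 'S_N) v sigma * wcoef q Ax.2 Ax.1 sigma pi.

(* For l = [:: (A_1,x_1); ...; (A_n,x_n)]:
   f l s   = w_{t_n,x_n} ... w_{t_1,x_1} s   (t_1 applied first),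
   ftilde l s = w_{t_1,x_1} ... w_{t_n,x_n} s (t_n applied first). *)
Definition f (N : nat) (q : C) (l : seq ('I_N * C)) (s : 'S_N) : 'S_N -> C :=
  foldl (fun v Ax => wop q Ax v) (delta s) l.
Definition ftilde (N : nat) (q : C) (l : seq ('I_N * C)) (s : 'S_N) : 'S_N -> C :=
  foldr (fun Ax v => wop q Ax v) (delta s) l.

(* Main.v *)
Require Import Defs.
From HB Require Import structures.
From mathcomp Require Import all_boot all_order all_algebra all_fingroup.
From mathcomp Require Import complex.
From mathcomp Require Import Rstruct.
From mathcomp Require Import ring zify.
From Stdlib Require Import FunctionalExtensionality.
Import GRing.Theory.
Local Open Scope ring_scope.

Section Aux.
Variables (N : nat) (q : C).

Definition Aj (A : 'I_N) : 'I_N := insubd A A.+1.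
Lemma val_Aj (A : 'I_N) : (A.+1 < N)%N -> val (Aj A) = A.+1.
Proof. by move=> h; rewrite /Aj val_insubd h. Qed.

Lemma val_tperm (i j u : 'I_N) :
  val (tperm i j u) = if val u == val j then val i else if val u == val i then val j else val u.
Proof.
case: tpermP => [->|->|/eqP h1 /eqP h2].
- by rewrite eqxx; case: eqP => // ->.
- by rewrite eqxx.
- by rewrite !val_eqE (negbTE h1) (negbTE h2).
Qed.

Lemma swap_lt (i u v : 'I_N) : (i.+1 < N)%N -> u != v ->
  ~~ ((u == i) && (v == Aj i) || (u == Aj i) && (v == i)) ->
  (val (tperm i (Aj i) u) < val (tperm i (Aj i) v))%N = (val u < val v)%N.
Proof.
move=> hi; rewrite -!val_eqE !val_tperm val_Aj //.
have := ltn_ord u; have := ltn_ord v.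
move=> _ _.
case: (val u =P i.+1); case: (val u =P val i); case: (val v =P i.+1); case: (val v =P val i) => /= *; lia.
Qed.

Definition yv (x : C) (A : 'I_N) (s : 'S_N) : C :=
  if (val ((s^-1)%g A) < val ((s^-1)%g (Aj A)))%N then x else q * x.
Definition zv (x : C) (B : 'I_N) (s : 'S_N) : C :=
  if (val (s B) < val (s (Aj B)))%N then x else q * x.

Lemma wcoefE x A s p : wcoef q x A s p =
  (if p == s then 1 - yv x A s else 0) + (if p == (s * adjt A)%g then yv x A s else 0).
Proof. by []. Qed.

Lemma wcoefVE x B s p : wcoef q x B (s^-1)%g (p^-1)%g =
  (if p == s then 1 - zv x B s else 0) + (if p == (adjt B * s)%g then zv x B s else 0).
Proof.
rewrite /wcoef /zv invgK (inj_eq invg_inj).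
have -> : ((p^-1)%g == (s^-1 * adjt B)%g) = (p == (adjt B * s)%g).
  apply/eqP/eqP => [h|->].
  - by rewrite -[p]invgK h invMg invgK /adjt tpermV.
  - by rewrite invMg /adjt tpermV.
by [].
Qed.

Lemma sum_one (a : 'S_N) (al : C) (g : 'S_N -> C) :
  \sum_(t : 'S_N) (if t == a then al else 0) * g t = al * g a.
Proof.
rewrite (bigD1 a) //= eqxx big1 ?addr0 // => t /negbTE ->; by rewrite mul0r.
Qed.

Lemma sum_two (a b : 'S_N) (al be : C) (g : 'S_N -> C) :
  \sum_(t : 'S_N) ((if t == a then al else 0) + (if t == b then be else 0)) * g t
  = al * g a + be * g b.
Proof.
under eq_bigr => t _ do rewrite mulrDl.
by rewrite big_split /= !sum_one.
Qed.

Definition wopR (Ax : 'I_N * C) (v : 'S_N -> C) : 'S_N -> C :=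
  fun p => \sum_(s : 'S_N) v s * wcoef q Ax.2 Ax.1 (s^-1)%g (p^-1)%g.

Lemma vinv_wop a v p : wop q a v (p^-1)%g = wopR a (fun s => v (s^-1)%g) p.
Proof. by rewrite /wop /wopR (reindex_inj invg_inj). Qed.

Lemma foldl_inv l v p :
  foldl (fun v Ax => wop q Ax v) v l (p^-1)%g =
  foldl (fun v Ax => wopR Ax v) (fun s => v (s^-1)%g) l p.
Proof.
elim: l v => [|a l IH] v //=.
rewrite IH; congr (foldl _ _ _ _).
by apply: functional_extensionality => s; rewrite vinv_wop.
Qed.

Lemma invP_eq (s : 'S_N) a b : ((s^-1)%g a == b) = (a == s b).
Proof. by apply/eqP/eqP => [<-|->]; rewrite ?permKV ?permK. Qed.

Lemma key (A B : 'I_N) x x' s p : (A.+1 < N)%N -> (B.+1 < N)%N ->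
  \sum_t wcoef q x' B (s^-1)%g (t^-1)%g * wcoef q x A t p =
  \sum_t wcoef q x A s t * wcoef q x' B (t^-1)%g (p^-1)%g.
Proof.
move=> hA hB.
under eq_bigr => t _ do rewrite wcoefVE.
under [RHS]eq_bigr => t _ do rewrite wcoefE.
rewrite !sum_two !wcoefVE !wcoefE mulgA.
have hBB : B != Aj B by rewrite -val_eqE val_Aj //=; apply/eqP; lia.
have hAA : A != Aj A by rewrite -val_eqE val_Aj //=; apply/eqP; lia.
case hex: ((s B == A) && (s (Aj B) == Aj A) || (s B == Aj A) && (s (Aj B) == A)).
- have hc : (adjt B * s = s * adjt A)%g.
    have h : (adjt B ^ s)%g = adjt A.
      rewrite /adjt tpermJ -/(Aj B) -/(Aj A).
      case/orP: hex => /andP[/eqP -> /eqP ->] //; exact: tpermC.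
    by rewrite -h /conjg mulgA mulgV mul1g.
  have hcc : (s * adjt A * adjt A = s)%g by rewrite -mulgA /adjt tperm2 mulg1.
  case/orP: hex => /andP[/eqP h1 /eqP h2].
  + have e1 : (s^-1)%g A = B by rewrite -h1 permK.
    have e2 : (s^-1)%g (Aj A) = Aj B by rewrite -h2 permK.
    have y0 : yv x A s = x by rewrite /yv e1 e2 val_Aj // ltnSn.
    have y1 : yv x A (adjt B * s) = q * x.
      rewrite /yv invMg /adjt tpermV !permM -/(Aj B) e1 e2 tpermL tpermR val_Aj //.
      case: ifP => //=; lia.
    have z0 : zv x' B s = x' by rewrite /zv h1 h2 val_Aj // ltnSn.
    have z1 : zv x' B (s * adjt A) = q * x'.
      rewrite /zv !permM h1 h2 /adjt -/(Aj A) tpermL tpermR val_Aj //.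
      case: ifP => //=; lia.
    rewrite y0 y1 z0 z1 hc hcc.
    case: (p == s); case: (p == (s * adjt A)%g); ring.
  + have e1 : (s^-1)%g (Aj A) = B by rewrite -h1 permK.
    have e2 : (s^-1)%g A = Aj B by rewrite -h2 permK.
    have y0 : yv x A s = q * x.
      rewrite /yv e1 e2 val_Aj //; case: ifP => //=; lia.
    have y1 : yv x A (adjt B * s) = x.
      rewrite /yv invMg /adjt tpermV !permM -/(Aj B) e1 e2 tpermL tpermR val_Aj //.
      by rewrite ltnSn.
    have z0 : zv x' B s = q * x'.
      rewrite /zv h1 h2 val_Aj //; case: ifP => //=; lia.
    have z1 : zv x' B (s * adjt A) = x'.
      rewrite /zv !permM h1 h2 /adjt -/(Aj A) tpermL tpermR val_Aj //.
      by rewrite ltnSn.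
    rewrite y0 y1 z0 z1 hc hcc.
    case: (p == s); case: (p == (s * adjt A)%g); ring.
- have hz : zv x' B (s * adjt A) = zv x' B s.
    rewrite /zv !permM /adjt -/(Aj A) swap_lt //.
      by rewrite (inj_eq perm_inj).
    by rewrite hex.
  have hy : yv x A (adjt B * s) = yv x A s.
    rewrite /yv invMg /adjt tpermV !permM -/(Aj B) swap_lt //.
      by rewrite (inj_eq perm_inj).
    rewrite !invP_eq (eq_sym A) (eq_sym (Aj A)) (eq_sym _ (s B)) (eq_sym _ (s (Aj B))).
    move: hex.
    by case: (s B == A); case: (s (Aj B) == Aj A); case: (s (Aj B) == A); case: (s B == Aj A).
  rewrite hy hz.
  case: (p == s); case: (p == (s * adjt A)%g); case: (p == (adjt B * s)%g);
    case: (p == (adjt B * s * adjt A)%g); ring.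
Qed.

Definition adj (Ax : 'I_N * C) : bool := (Ax.1.+1 < N)%N.

Lemma comm a b v : adj a -> adj b ->
  wop q a (wopR b v) = wopR b (wop q a v).
Proof.
move=> ha hb; apply: functional_extensionality => p.
rewrite /wop /wopR.
under eq_bigr => t _ do rewrite mulr_suml.
under [RHS]eq_bigr => t _ do rewrite mulr_suml.
rewrite exchange_big [RHS]exchange_big /=.
apply: eq_bigr => s _.
under eq_bigr => t _ do rewrite -mulrA.
under [RHS]eq_bigr => t _ do rewrite -mulrA.
rewrite -!mulr_sumr; congr (_ * _).
exact: key.
Qed.

Lemma comm_fold a l v : adj a -> all adj l ->
  wop q a (foldl (fun v Ax => wopR Ax v) v l) =
  foldl (fun v Ax => wopR Ax v) (wop q a v) l.
Proof.
move=> ha; elim: l v => [|b l IH] v //= /andP[hb hl].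
by rewrite IH // comm.
Qed.

Lemma yz1 x A : yv x A 1%g = zv x A 1%g.
Proof. by rewrite /yv /zv invg1 !perm1. Qed.

Lemma base a : adj a -> wop q a (delta 1%g) = wopR a (delta 1%g).
Proof.
move=> ha; apply: functional_extensionality => p.
rewrite /wop /wopR /delta !sum_one !mul1r wcoefE wcoefVE yz1 mulg1 mul1g //.
Qed.

Lemma main l : all adj l ->
  foldr (fun Ax v => wop q Ax v) (delta 1%g) l =
  foldl (fun v Ax => wopR Ax v) (delta 1%g) l.
Proof.
elim: l => [|a l IH] //= /andP[ha hl].
by rewrite IH // comm_fold // base.
Qed.

End Aux.

Theorem theorem2p2 (N : nat) (hN : (1 <= N)%N) (q : C) (l : seq ('I_N * C))
  (hl : all (fun Ax : 'I_N * C => (Ax.1).+1 < N)%N l) (pi : 'S_N) :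
  f q l 1%g pi = ftilde q l 1%g (pi^-1)%g.
Proof.
rewrite /f /ftilde -{1}[pi]invgK foldl_inv main //.
congr (foldl _ _ _ _).
apply: functional_extensionality => s.
by rewrite /delta invg_eq1.
Qed.
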